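(* Let $n\ge 3$ and consider the cycle graph on nodes $1,\dots,n$ with measurements $\widetilde{R}_{12},\dots,\widetilde{R}_{n-1,n},\widetilde{R}_{n1}\in\mathrm{SO}(3)$ that all lie in a common one-parameter subgroup of $\mathrm{SO}(3)$ (all are rotations about a common axis). Then the point $R^\ast=(R_1^\ast,\dots,R_n^\ast)$ with $R_1^\ast=I_3$ and $$R_i^\ast=\Big(\prod_{s=1}^{i-1}\widetilde{R}_{s,s+1}\Big)^{\top}E_0^{\,i-1},\qquad i\in\{2,\dots,n\},$$ (product from left to right) is a global minimizer of $f$ over $\mathrm{SO}(3)^n$.
   Context: Cycle-graph rotation averaging setup. Let $n\ge 3$. The cycle graph has nodes $1,\dots,n$ and edges $\{i,i+1\}$ for $i=1,\dots,n-1$ together with $\{n,1\}$; write $i\sim j$ if $\{i,j\}$ is an edge. Each edge carries a measured rotation $\widetilde{R}_{ij}\in\mathrm{SO}(3)$, with the convention $\widetilde{R}_{ji}=\widetilde{R}_{ij}^\top$. Define the symmetric $3n\times 3n$ block matrix $\widetilde{R}$ whose $(i,j)$ $3\times3$ block is $I_3$ if $i=j$, $\widetilde{R}_{ij}$ if $i\sim j$, and $0$ otherwise. For $R=(R_1,\dots,R_n)\in\mathrm{SO}(3)^n$, write $R=[R_1^\top\ \cdots\ R_n^\top]^\top\in\mathbb{R}^{3n\times 3}$ and define $f(R):=-\operatorname{Tr}(R^\top\widetilde{R}R)$; the rotation averaging problem is to minimize $f$ over $\mathrm{SO}(3)^n$. The cycle error is $E:=\widetilde{R}_{12}\widetilde{R}_{23}\cdots\widetilde{R}_{n-1,n}\widetilde{R}_{n1}\in\mathrm{SO}(3)$.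 Write $E=\exp(\gamma[\hat n]_\times)$ with unit axis $\hat n$ and angle $\gamma=\angle(E)\in[-\pi,\pi]$. For $k\in\{0,\dots,n-1\}$, $E_k:=\exp\big((\gamma/n-2k\pi/n)[\hat n]_\times\big)$; in particular $E_0=\exp((\gamma/n)[\hat n]_\times)$. *)

(* Defs.v *)
From HB Require Import structures.
From mathcomp Require Import all_boot all_order all_algebra.
From mathcomp Require Import reals trigo.
Set Implicit Arguments. Unset Strict Implicit. Unset Printing Implicit Defensive.
Import Order.TTheory GRing.Theory Num.Theory.
Local Open Scope ring_scope.

Section Defs.
Variable R : realType.

Definition SO3 (Q : 'M[R]_3) : Prop := Q^T *m Q = 1%:M /\ \det Q = 1.

Definition unit_vec (u : 'cV[R]_3) : Prop := \sum_(i < 3) u i 0 ^+ 2 = 1.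

Definition skew (u : 'cV[R]_3) : 'M[R]_3 :=
  \matrix_(i < 3, j < 3)
    (match nat_of_ord i, nat_of_ord j with
     | 0, 1 => - u (inord 2) 0
     | 0, 2 => u (inord 1) 0
     | 1, 0 => u (inord 2) 0
     | 1, 2 => - u (inord 0) 0
     | 2, 0 => - u (inord 1) 0
     | 2, 1 => u (inord 0) 0
     | _, _ => 0
     end).

(* exp(t [u]_x) for a unit axis u, via Rodrigues' formula *)
Definition rotexp (u : 'cV[R]_3) (t : R) : 'M[R]_3 :=
  1%:M + sin t *: skew u + (1 - cos t) *: (skew u *m skew u).

(* Cycle graph on nodes 0..n-1 (0-based); edge i -- (i+1 mod n).
   Rt i is the measurement R~_{i,i+1 mod n}. Block (i,j) of the 3n x 3n
   matrix R~: I if i = j, R~_{ij} if i ~ j (with R~_{ji} = R~_{ij}^T), 0 otherwise. *)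
Definition blk (n : nat) (Rt : 'I_n -> 'M[R]_3) (i j : 'I_n) : 'M[R]_3 :=
  if i == j then 1%:M
  else if ((i.+1 %% n)%N == j) then Rt i
  else if ((j.+1 %% n)%N == i) then (Rt j)^T
  else 0.

(* f(R) = - Tr(R^T R~ R), expanded blockwise *)
Definition fcost (n : nat) (Rt : 'I_n -> 'M[R]_3) (Q : 'I_n -> 'M[R]_3) : R :=
  - \sum_(i < n) \sum_(j < n) \tr ((Q i)^T *m blk Rt i j *m Q j).

Definition cycle_err (n : nat) (Rt : 'I_n -> 'M[R]_3) : 'M[R]_3 :=
  \prod_(i < n) Rt i.

(* candidate R*_k = (prod_{s<k} R~_{s,s+1})^T E0^k  (0-based k) *)
Definition Rstar (n : nat) (Rt : 'I_n -> 'M[R]_3) (E0 : 'M[R]_3) (k : 'I_n)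
  : 'M[R]_3 :=
  (\prod_(s < n | (s < k)%N) Rt s)^T *m (E0 ^+ k).

End Defs.

(* Main.v *)
Require Import Defs.
From HB Require Import structures.
From mathcomp Require Import all_boot all_order all_algebra.
From mathcomp Require Import reals trigo.
From mathcomp Require Import ring lra zify.
Set Implicit Arguments. Unset Strict Implicit. Unset Printing Implicit Defensive.
Import Order.TTheory GRing.Theory Num.Theory.
Local Open Scope ring_scope.



Section Rot.
Variable R : realType.

Lemma sum3 (F : 'I_3 -> R) : \sum_(i < 3) F i = F (inord 0) + F (inord 1) + F (inord 2).
Proof.
rewrite !big_ord_recr big_ord0 /= add0r; congr (_ + _ + _); congr F; apply: val_inj;
  by rewrite /= inordK.
Qed.

Lemma ord3P (P : 'I_3 -> Prop) : P (inord 0) -> P (inord 1) -> P (inord 2) -> forall i, P i.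
Proof.
move=> h0 h1 h2 [[|[|[|k]]] Hk] //.
- by have -> : Ordinal Hk = inord 0 by apply: val_inj; rewrite /= inordK.
- by have -> : Ordinal Hk = inord 1 by apply: val_inj; rewrite /= inordK.
- by have -> : Ordinal Hk = inord 2 by apply: val_inj; rewrite /= inordK.
Qed.

Lemma i30 : nat_of_ord (inord 0 : 'I_3) = 0%N. Proof. by rewrite inordK. Qed.
Lemma i31 : nat_of_ord (inord 1 : 'I_3) = 1%N. Proof. by rewrite inordK. Qed.
Lemma i32 : nat_of_ord (inord 2 : 'I_3) = 2%N. Proof. by rewrite inordK. Qed.

Lemma n01 : (inord 0 == inord 1 :> 'I_3) = false. Proof. by rewrite -(inj_eq val_inj) /= !inordK. Qed.
Lemma n02 : (inord 0 == inord 2 :> 'I_3) = false. Proof. by rewrite -(inj_eq val_inj) /= !inordK. Qed.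
Lemma n12 : (inord 1 == inord 2 :> 'I_3) = false. Proof. by rewrite -(inj_eq val_inj) /= !inordK. Qed.
Lemma n10 : (inord 1 == inord 0 :> 'I_3) = false. Proof. by rewrite -(inj_eq val_inj) /= !inordK. Qed.
Lemma n20 : (inord 2 == inord 0 :> 'I_3) = false. Proof. by rewrite -(inj_eq val_inj) /= !inordK. Qed.
Lemma n21 : (inord 2 == inord 1 :> 'I_3) = false. Proof. by rewrite -(inj_eq val_inj) /= !inordK. Qed.
Lemma ord0E : (ord0 : 'I_1) = 0. Proof. by []. Qed.

Lemma ord10 (i : 'I_1) : i = 0. Proof. by apply: val_inj; case: i => [[|]]. Qed.

Variable a : 'cV[R]_3.
Hypothesis Ha : unit_vec a.
Local Notation Kx := (Defs.skew a).

Ltac mxsolve := apply/matrixP; apply: ord3P; apply: ord3P;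
  rewrite ?mxE ?sum3 ?mxE ?i30 ?i31 ?i32 /=.

Lemma skewT : (Defs.skew a)^T = - Defs.skew a.
Proof. by mxsolve; ring. Qed.

Lemma skew_a : Kx *m a = 0.
Proof.
apply/matrixP => i j; rewrite (ord10 j); move: i; apply: ord3P;
 rewrite !mxE sum3 !mxE ?i30 ?i31 ?i32 /=; ring.
Qed.

Lemma skew2 : Kx *m Kx = a *m a^T - 1%:M.
Proof.
move: Ha; rewrite /unit_vec sum3 => H.
mxsolve; rewrite ?big_ord1 ?mxE ?eqxx /=.
all: rewrite ?n01 ?n02 ?n12 ?n10 ?n20 ?n21 ?ord0E /=; lra.
Qed.

Lemma skew3r : Kx *m (Kx *m Kx) = - Kx.
Proof. by rewrite skew2 mulmxBr mulmxA skew_a mul0mx mulmx1 sub0r. Qed.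
Lemma skew3l : (Kx *m Kx) *m Kx = - Kx.
Proof. by rewrite -mulmxA skew3r. Qed.
Lemma skew4 : (Kx *m Kx) *m (Kx *m Kx) = - (Kx *m Kx).
Proof. by rewrite mulmxA skew3l mulNmx. Qed.

Lemma rotexpD s t : rotexp a s *m rotexp a t = rotexp a (s + t).
Proof.
rewrite /rotexp.
rewrite !mulmxDl !mulmxDr !mul1mx !mulmx1 -!scalemxAl -!scalemxAr !scalerA.
rewrite skew3l skew3r skew4.
apply/matrixP => i j; rewrite !mxE sinD cosD.
set k1 := Kx i j; set k2 := (Kx *m Kx) i j.
set ss := sin s; set cs := cos s; set st := sin t; set ct := cos t.
ring.
Qed.

Lemma rotexp0 : rotexp a 0 = 1%:M.
Proof. by rewrite /rotexp sin0 cos0 subrr !scale0r !addr0. Qed.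

Lemma rotexpT t : (rotexp a t)^T = rotexp a (- t).
Proof.
rewrite /rotexp !linearD !linearZ /= trmx_mul trmx1 skewT mulmxN mulNmx opprK sinN cosN.
by rewrite scaleNr scalerN.
Qed.

Lemma rotexp_orth t : (rotexp a t)^T *m rotexp a t = 1%:M.
Proof. by rewrite rotexpT rotexpD addNr rotexp0. Qed.

Lemma rotexp_orth' t : rotexp a t *m (rotexp a t)^T = 1%:M.
Proof. by rewrite rotexpT rotexpD addrN rotexp0. Qed.

Lemma rotexpX k t : rotexp a t ^+ k = rotexp a (k%:R * t).
Proof.
elim: k => [|k IH]; first by rewrite expr0 mul0r rotexp0.
by rewrite exprS IH -mulmxE rotexpD -{1}(mul1r t) -mulrDl -natr1 addrC.
Qed.

Lemma rotexp_det t : \det (rotexp a t) = 1.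
Proof.
have h : rotexp a t = rotexp a (t / 2) *m rotexp a (t / 2).
  by rewrite rotexpD; congr rotexp; field.
have h2 : \det (rotexp a (t / 2)) ^+ 2 = 1.
  by rewrite expr2 -{1}det_tr -det_mulmx rotexp_orth det1.
by rewrite h det_mulmx -expr2.
Qed.
End Rot.



Section CS.
Variable R : realType.

Lemma wcs (m : nat) (w d : nat -> R) :
  (forall j, (j < m)%N -> 0 < w j) ->
  (\sum_(0 <= j < m) d j) ^+ 2 <=
  (\sum_(0 <= j < m) (w j)^-1) * \sum_(0 <= j < m) w j * d j ^+ 2.
Proof.
move=> wpos.
case: m wpos => [|m] wpos; first by rewrite !big_geq // expr2 mul0r.
set T := \sum_(0 <= j < m.+1) (w j)^-1.
set D := \sum_(0 <= j < m.+1) d j.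
have Tpos : 0 < T.
  rewrite /T big_nat_recr //= ltr_wpDl //; last by rewrite invr_gt0 wpos.
  by rewrite big_nat_cond; apply: sumr_ge0 => j /andP [/andP [_ hj] _]; rewrite invr_ge0 ltW // wpos // ltnW.
have key : 0 <= \sum_(0 <= j < m.+1) w j * (d j - D / (w j * T)) ^+ 2.
  rewrite big_nat_cond; apply: sumr_ge0 => j /andP [/andP [_ hj] _]; apply: mulr_ge0; first by rewrite ltW // wpos.
  exact: sqr_ge0.
have e : \sum_(0 <= j < m.+1) w j * (d j - D / (w j * T)) ^+ 2 =
   \sum_(0 <= j < m.+1) w j * d j ^+ 2 - 2 * (D / T) * D + (D / T) ^+ 2 * T.
  rewrite /D /T mulr_sumr [X in _ + X]mulr_sumr -sumrN -!big_split /=.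
  apply: eq_big_nat => j /andP [_ hj].
  have wj : w j != 0 by rewrite gt_eqF // wpos.
  rewrite -/D -/T; field.
  by rewrite wj gt_eqF.
rewrite e in key.
have : 0 <= T * (\sum_(0 <= j < m.+1) w j * d j ^+ 2 - 2 * (D / T) * D + (D / T) ^+ 2 * T).
  by rewrite mulr_ge0 // ltW.
have -> : T * (\sum_(0 <= j < m.+1) w j * d j ^+ 2 - 2 * (D / T) * D + (D / T) ^+ 2 * T)
   = T * \sum_(0 <= j < m.+1) w j * d j ^+ 2 - D ^+ 2.
  by field; rewrite gt_eqF.
by rewrite subr_ge0.
Qed.

Lemma edge_alg (b0 b1 v0 v1 c0 c1 ch sh : R) : v0 != 0 -> v1 != 0 ->
 (b1 - b0) ^+ 2 - (v0 * v1 * (b1 / v1 - b0 / v0) ^+ 2 + (1 - ch) * (b0 ^+ 2 + b1 ^+ 2)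
   + sh * (c1 / v1 * b1 ^+ 2 - c0 / v0 * b0 ^+ 2)) =
 - ((b1 / v1) ^+ 2 * v1 * (v0 - (v1 * ch - c1 * sh))) - (b0 / v0) ^+ 2 * v0 * (v1 - (v0 * ch + c0 * sh)).
Proof. by move=> h0 h1; field; rewrite h0 h1. Qed.

Section Anti.
Variables (m : nat) (b : nat -> R).
Hypothesis hb : b m.+2 = - b 0.
Let nR : R := (m.+2)%:R.
Let h : R := pi / nR.
Let x (j : nat) : R := (j%:R + 2^-1) * h.
Let v j := sin (x j).
Let c j := cos (x j).
Let t j := b j / v j.
Let ct j := c j / v j.

Lemma nR_gt0 : 0 < nR. Proof. by rewrite /nR ltr0n. Qed.
Lemma h_gt0 : 0 < h. Proof. by rewrite /h divr_gt0 // ?pi_gt0 // nR_gt0. Qed.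
Lemma h_le : h <= pi / 2.
Proof.
rewrite /h ler_pdivrMr ?nR_gt0 //.
have : 2 <= nR by rewrite /nR ler_nat.
have := pi_gt0 R; move=> *; nra.
Qed.

Lemma v_gt0 j : (j < m.+2)%N -> 0 < v j.
Proof.
move=> hj; apply: sin_gt0_pi; apply/andP; split.
  by rewrite /x mulr_gt0 ?h_gt0 // ltr_wpDl // ?invr_gt0 ?ler0n.
have hj' : j%:R + 1 <= nR by rewrite /nR -natr1 lerD2r ler_nat.
have hp := pi_gt0 R; have hn := nR_gt0.
rewrite /x /h.
have -> : (j%:R + 2^-1) * (pi / nR) = ((j%:R + 2^-1) / nR) * pi by rewrite mulrAC mulrA.
rewrite -ltr_pdivlMr // divff ?gt_eqF // ltr_pdivrMr // mul1r; lra.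
Qed.

Lemma xS j : x j.+1 = x j + h.
Proof. by rewrite /x -addn1 natrD; ring. Qed.

Lemma x0 : x 0 = h / 2.
Proof. by rewrite /x add0r mulrC. Qed.

Lemma xlast : x m.+1 = pi - h / 2.
Proof.
rewrite /x /h.
have : nR = m.+1%:R + 1 by rewrite /nR -natr1.
have hn := nR_gt0.
move=> e; rewrite e in hn *.
set q := m.+1%:R in hn *.
move: q hn => q hn; field; by rewrite gt_eqF.
Qed.

Lemma vlast : v m.+1 = v 0.
Proof. by rewrite /v xlast x0 sinB sinpi cospi; ring. Qed.
Lemma clast : c m.+1 = - c 0.
Proof. by rewrite /c xlast x0 cosB sinpi cospi; ring. Qed.

Lemma c0_gt0 : 0 < c 0.
Proof.
rewrite /c x0; apply: cos_gt0_pihalf; have := h_le; have := h_gt0; have := pi_gt0 R.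
move=> *; apply/andP; split; lra.
Qed.

Lemma edge j : (j < m.+1)%N ->
  (b j.+1 - b j) ^+ 2 = v j * v j.+1 * (t j.+1 - t j) ^+ 2
     + (1 - cos h) * (b j ^+ 2 + b j.+1 ^+ 2)
     + sin h * (ct j.+1 * b j.+1 ^+ 2 - ct j * b j ^+ 2).
Proof.
move=> hj.
have v0 : v j != 0 by rewrite gt_eqF // v_gt0 // ltnW.
have v1 : v j.+1 != 0 by rewrite gt_eqF // v_gt0.
have R1 : v j.+1 = v j * cos h + c j * sin h by rewrite /v /c xS sinD.
have R2 : v j = v j.+1 * cos h - c j.+1 * sin h.
  have ex : x j = x j.+1 - h by rewrite xS addrK.
  by rewrite /v /c {1}ex sinB.
apply/eqP; rewrite -subr_eq0; apply/eqP.
rewrite /t /ct edge_alg // -R1 -R2 !subrr !mulr0.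
lra.
Qed.


Lemma sh_gt0 : 0 < sin h.
Proof.
apply: sin_gt0_pi; have := h_le; have := h_gt0; have := pi_gt0 R; move=> *.
apply/andP; split; lra.
Qed.

Lemma hsplit : h = h / 2 + h / 2. Proof. by rewrite -splitr. Qed.

Lemma sh_eq : sin h = 2 * v 0 * c 0.
Proof. by rewrite /v /c x0 {1}hsplit sinD; ring. Qed.
Lemma ch_eq : cos h = c 0 ^+ 2 - v 0 ^+ 2.
Proof. by rewrite /v /c x0 {1}hsplit cosD; ring. Qed.
Lemma v0_gt0 : 0 < v 0. Proof. exact: v_gt0. Qed.

Lemma alg1 (v0 v1 c0 c1 sh : R) : v0 != 0 -> v1 != 0 -> sh != 0 ->
  sh = v1 * c0 - c1 * v0 -> (v0 * v1)^-1 = (c0 / v0 - c1 / v1) / sh.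
Proof. move=> h0 h1 h2 e; rewrite e in h2 *; field; by rewrite h0 h1 h2. Qed.

Lemma alg2 (v0 c0 : R) : v0 != 0 -> c0 != 0 -> 2 * (c0 / v0) / (2 * v0 * c0) = (v0 ^+ 2)^-1.
Proof. by move=> h0 h1; field; rewrite h0 h1. Qed.

Lemma sumw : \sum_(0 <= j < m.+1) (v j * v j.+1)^-1 = (v 0 ^+ 2)^-1.
Proof.
have shn : sin h != 0 by rewrite gt_eqF // sh_gt0.
rewrite (@eq_big_nat _ _ _ 0 m.+1 _ (fun j => - (ct j.+1 / sin h - ct j / sin h))); last first.
  move=> j /andP [_ hj].
  have hv0 : v j != 0 by rewrite gt_eqF // v_gt0 // ltnW.
  have hv1 : v j.+1 != 0 by rewrite gt_eqF // v_gt0.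
  rewrite (@alg1 _ _ (c j) (c j.+1) (sin h) hv0 hv1 shn); first by rewrite /ct mulrBl opprB.
  have ex : h = x j.+1 - x j by rewrite xS addrC addKr.
  by rewrite {1}ex sinB /v /c.
rewrite sumrN telescope_sumr // /ct clast vlast.
have c0n : c 0 != 0 by rewrite gt_eqF // c0_gt0.
have v0n : v 0 != 0 by rewrite gt_eqF // v0_gt0.
rewrite sh_eq.
move: (c 0) (v 0) c0n v0n => c0 v0 c0n v0n; field.
by rewrite c0n v0n.
Qed.

Lemma anti : (2 - 2 * cos h) * \sum_(0 <= j < m.+2) b j ^+ 2 <=
   \sum_(0 <= j < m.+2) (b j.+1 - b j) ^+ 2.
Proof.
set B := \sum_(0 <= j < m.+2) b j ^+ 2.
set W := \sum_(0 <= j < m.+1) v j * v j.+1 * (t j.+1 - t j) ^+ 2.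
have Htot : \sum_(0 <= j < m.+2) (b j.+1 - b j) ^+ 2 =
   W + (1 - cos h) * (2 * B - b 0 ^+ 2 - b m.+1 ^+ 2)
     + sin h * (ct m.+1 * b m.+1 ^+ 2 - ct 0 * b 0 ^+ 2) + (b 0 + b m.+1) ^+ 2.
  rewrite big_nat_recr //= hb.
  rewrite (eq_big_nat _ _ (fun j hj => edge (proj2 (andP hj)))).
  rewrite !big_split /= -/W -mulr_sumr -mulr_sumr telescope_sumr // big_split /=.
  have e1 : \sum_(0 <= i < m.+1) b i ^+ 2 = B - b m.+1 ^+ 2 by rewrite /B (big_nat_recr m.+1) //= addrK.
  have e2 : \sum_(0 <= i < m.+1) b i.+1 ^+ 2 = B - b 0 ^+ 2 by rewrite /B (big_nat_recl m.+1) //= addrAC subrr add0r.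
  rewrite e1 e2.
  have -> : (- b 0 - b m.+1) ^+ 2 = (b 0 + b m.+1) ^+ 2 by ring.
  by congr (_ + _ + _ + _); ring.
have HW : (b 0 - b m.+1) ^+ 2 <= W.
  have := @wcs m.+1 (fun j => v j * v j.+1) (fun j => t j.+1 - t j).
  rewrite telescope_sumr // sumw => /(_ _).
  have H : forall j, (j < m.+1)%N -> 0 < v j * v j.+1.
    by move=> j hj; rewrite mulr_gt0 // v_gt0 // ltnW.
  move=> /(_ H).
  have v0n : v 0 != 0 by rewrite gt_eqF // v0_gt0.
  have -> : b 0 - b m.+1 = - (v 0 * (t m.+1 - t 0)).
    by rewrite /t -vlast; field; rewrite vlast.
  rewrite sqrrN exprMn -/W => H2.
  have v2 : 0 < v 0 ^+ 2 by rewrite exprn_gt0 // v0_gt0.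
  by have := ler_wpM2l (ltW v2) H2; rewrite mulVKf ?gt_eqF.
have Hk : sin h * (ct m.+1 * b m.+1 ^+ 2 - ct 0 * b 0 ^+ 2) =
     - (1 + cos h) * (b m.+1 ^+ 2 + b 0 ^+ 2).
  have v0n : v 0 != 0 by rewrite gt_eqF // v0_gt0.
  rewrite /ct clast vlast sh_eq ch_eq.
  have := sin2cos2 (x 0); rewrite -/(v 0) -/(c 0) => e.
  move: (v 0) (c 0) v0n e => v0 c0 v0n e.
  rewrite e; field; by rewrite v0n.
rewrite Htot Hk.
have -> : W + (1 - cos h) * (2 * B - b 0 ^+ 2 - b m.+1 ^+ 2) +
   - (1 + cos h) * (b m.+1 ^+ 2 + b 0 ^+ 2) + (b 0 + b m.+1) ^+ 2 =
   (2 - 2 * cos h) * B + (W - (b 0 - b m.+1) ^+ 2) by ring.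
by rewrite lerDl subr_ge0.
Qed.

End Anti.
End CS.



Section Scal.
Variable R : realType.

Lemma shift_sum (f : nat -> R) n : f n = f 0 ->
  \sum_(0 <= j < n) f j.+1 = \sum_(0 <= j < n) f j.
Proof.
case: n => [|k] hf; first by rewrite !big_geq.
by rewrite big_nat_recr //= hf [RHS](big_nat_recl k) // addrC.
Qed.

Lemma per_le (b : nat -> R) n : b n = b 0 ->
  \sum_(0 <= j < n) b j * b j.+1 <= \sum_(0 <= j < n) b j ^+ 2.
Proof.
move=> hb.
have h0 : 0 <= \sum_(0 <= j < n) (b j.+1 - b j) ^+ 2 by apply: sumr_ge0 => j _; exact: sqr_ge0.
have e : \sum_(0 <= j < n) (b j.+1 - b j) ^+ 2 =
   \sum_(0 <= j < n) b j.+1 ^+ 2 + \sum_(0 <= j < n) b j ^+ 2 - 2 * \sum_(0 <= j < n) b j * b j.+1.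
  rewrite mulr_sumr -sumrN -!big_split /=; apply: eq_bigr => j _; ring.
rewrite e (@shift_sum (fun j => b j ^+ 2) n) /= ?hb // in h0.
lra.
Qed.

Lemma anti_cor m (b : nat -> R) : b m.+2 = - b 0 ->
  \sum_(0 <= j < m.+2) b j * b j.+1 <= cos (pi / (m.+2)%:R) * \sum_(0 <= j < m.+2) b j ^+ 2.
Proof.
move=> hb; have := anti hb.
have e : \sum_(0 <= j < m.+2) (b j.+1 - b j) ^+ 2 =
   \sum_(0 <= j < m.+2) b j.+1 ^+ 2 + \sum_(0 <= j < m.+2) b j ^+ 2 - 2 * \sum_(0 <= j < m.+2) b j * b j.+1.
  rewrite mulr_sumr -sumrN -!big_split /=; apply: eq_bigr => j _; ring.
rewrite e (@shift_sum (fun j => b j ^+ 2) m.+2) /=; last by rewrite hb sqrrN.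
set c := cos _; set B := \sum_(0 <= j < m.+2) _ ^+ 2; set S := \sum_(0 <= j < m.+2) _.
lra.
Qed.
End Scal.

Section Form.
Variable R : realType.
Definition form (M : 'M[R]_3) (x z : 'cV[R]_3) : R := (x^T *m M *m z) 0 0.

Lemma formD M N x z : form (M + N) x z = form M x z + form N x z.
Proof. by rewrite /form mulmxDr mulmxDl mxE. Qed.
Lemma formN M x z : form (- M) x z = - form M x z.
Proof. by rewrite /form mulmxN mulNmx mxE. Qed.
Lemma formB M N x z : form (M - N) x z = form M x z - form N x z.
Proof. by rewrite formD formN. Qed.
Lemma formZ k M x z : form (k *: M) x z = k * form M x z.
Proof. by rewrite /form -scalemxAr -scalemxAl mxE. Qed.
Lemma formT M x z : form M x z = form M^T z x.
Proof.
rewrite /form -[in LHS](trmxK (x^T *m M *m z)) mxE !trmx_mul trmxK.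
by rewrite mulmxA.
Qed.
Lemma form_mul A B x z : form (A^T *m B) x z = form 1%:M (A *m x) (B *m z).
Proof. by rewrite /form mulmx1 trmx_mul !mulmxA. Qed.
Lemma form_mulr A B x z : form (A *m B) x z = form A x (B *m z).
Proof. by rewrite /form !mulmxA. Qed.
Lemma form1E x z : form 1%:M x z = \sum_(i < 3) x i 0 * z i 0.
Proof.
by rewrite /form mulmx1 mxE; apply: eq_bigr => i _; rewrite mxE.
Qed.
Lemma formLx (x x' z : 'cV[R]_3) M : form M (x + x') z = form M x z + form M x' z.
Proof. by rewrite /form linearD /= !mulmxDl mxE. Qed.

Variable a : 'cV[R]_3.
Hypothesis Ha : unit_vec a.
Local Notation Kx := (Defs.skew a).
Definition al (x : 'cV[R]_3) : R := (a^T *m x) 0 0.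
Definition g1 x z := form Kx x z.
Definition g2 x z := - form (Kx *m Kx) x z.

Lemma form_rot t x z : form (rotexp a t) x z = cos t * g2 x z + sin t * g1 x z + al x * al z.
Proof.
rewrite /rotexp !formD !formZ /g1 /g2.
have e : form 1%:M x z = al x * al z - form (Kx *m Kx) x z.
  have e0 : form (a *m a^T) x z = al x * al z.
    rewrite /al /form mulmxA -[_ *m a^T *m z]mulmxA [LHS]mxE big_ord1.
    congr (_ * _); rewrite -[(x^T *m a)]trmxK trmx_mul trmxK mxE.
    by [].
  rewrite skew2 // formB e0; ring.
rewrite e; ring.
Qed.

Lemma g1xx x : g1 x x = 0.
Proof.
have : g1 x x = - g1 x x by rewrite /g1 {1}formT skewT formN.
lra.
Qed.
End Form.

Section Planar.
Variable R : realType.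
Variable a : 'cV[R]_3.
Hypothesis Ha : unit_vec a.
Local Notation Kx := (Defs.skew a).
Definition qv (x : 'cV[R]_3) : 'cV[R]_3 := - (Kx *m Kx) *m x.

Lemma formAB (M A B : 'M[R]_3) (x z : 'cV[R]_3) : form M (A *m x) (B *m z) = form (A^T *m M *m B) x z.
Proof. by rewrite /form trmx_mul !mulmxA. Qed.

Lemma trN (M : 'M[R]_3) : (- M)^T = - M^T.
Proof. exact: linearN. Qed.

Lemma K2T : (Kx *m Kx)^T = Kx *m Kx.
Proof. by rewrite trmx_mul skewT mulmxN mulNmx opprK. Qed.

Lemma g2q x z : g2 a (qv x) (qv z) = g2 a x z.
Proof.
rewrite /g2 /qv formAB trN K2T !mulNmx !mulmxN !opprK.
by rewrite skew4 // mulNmx skew4 // opprK.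
Qed.

Lemma g1q x z : g1 a (qv x) (qv z) = g1 a x z.
Proof.
rewrite /g1 /qv formAB trN K2T !mulNmx !mulmxN !opprK.
by rewrite skew3l // mulNmx skew3r // opprK.
Qed.

Lemma alq x : al a (qv x) = 0.
Proof.
rewrite /al /qv mulNmx mulmxN !mulmxA.
have -> : a^T *m Kx = 0.
  by rewrite -[a^T *m Kx]trmxK trmx_mul trmxK skewT mulNmx skew_a // oppr0 trmx0.
by rewrite !mul0mx oppr0 mxE.
Qed.

Lemma K2q x : Kx *m Kx *m qv x = - qv x.
Proof. by rewrite /qv !mulNmx mulmxN mulmxA skew4 // mulNmx. Qed.

Lemma rot_pi_q eps x : (eps = 1 \/ eps = -1) -> rotexp a (eps * pi) *m qv x = - qv x.
Proof.
move=> he; rewrite /rotexp.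
have [-> ->] : sin (eps * pi) = 0 /\ cos (eps * pi) = -1.
  by case: he => ->; rewrite ?mul1r ?mulN1r ?sinN ?cosN sinpi cospi ?oppr0.
rewrite scale0r addr0 mulmxDl mul1mx -scalemxAl K2q scalerN.
set u := qv x.
rewrite -{1}(scale1r u) -scalerBl.
have -> : 1 - (1 - -1) = -1 :> R by lra.
by rewrite scaleN1r.
Qed.


Lemma vanti m (w : nat -> 'cV[R]_3) : w m.+2 = - w 0 ->
  \sum_(0 <= j < m.+2) form 1%:M (w j) (w j.+1) <=
  cos (pi / (m.+2)%:R) * \sum_(0 <= j < m.+2) form 1%:M (w j) (w j).
Proof.
move=> hw.
under eq_bigr do rewrite form1E.
under [X in _ <= _ * X]eq_bigr do rewrite form1E.
rewrite exchange_big /= [X in _ <= _ * X]exchange_big /= mulr_sumr.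
apply: ler_sum => i _.
under [X in _ <= _ * X]eq_bigr do rewrite -expr2.
apply: (@anti_cor _ m (fun j => w j i 0)).
by rewrite hw mxE.
Qed.

Lemma formw (t : R) (j k : nat) (y z : 'cV[R]_3) :
  form 1%:M (rotexp a t ^+ j *m qv y) (rotexp a t ^+ k *m qv z) =
  cos ((k%:R - j%:R) * t) * g2 a y z + sin ((k%:R - j%:R) * t) * g1 a y z.
Proof.
rewrite formAB !rotexpX // rotexpT // mulmx1 rotexpD // form_rot // g2q g1q alq mul0r addr0.
by congr (cos _ * _ + sin _ * _); ring.
Qed.

Lemma planar m (x : nat -> 'cV[R]_3) (eps : R) : x m.+2 = x 0 -> (eps = 1 \/ eps = -1) ->
  cos (pi / (m.+2)%:R) * \sum_(0 <= j < m.+2) g2 a (x j) (x j.+1)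
  + eps * sin (pi / (m.+2)%:R) * \sum_(0 <= j < m.+2) g1 a (x j) (x j.+1)
  <= cos (pi / (m.+2)%:R) * \sum_(0 <= j < m.+2) g2 a (x j) (x j).
Proof.
move=> hx he.
set h := pi / (m.+2)%:R.
set psi := eps * h.
pose w j := rotexp a psi ^+ j *m qv (x j).
have hw : w m.+2 = - w 0.
  rewrite /w rotexpX // hx expr0 mul1mx.
  have -> : (m.+2)%:R * psi = eps * pi.
    rewrite /psi /h; have hn : (m.+2)%:R != 0 :> R by rewrite pnatr_eq0.
    move: ((m.+2)%:R) hn => nn hn; field; by [].
  by rewrite rot_pi_q.
have := vanti hw.
rewrite /w.
under eq_bigr do rewrite formw.
under [X in _ <= _ * X]eq_bigr do rewrite formw.
have hc : cos psi = cos h by rewrite /psi; case: he => ->; rewrite ?mul1r ?mulN1r ?cosN.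
have hs : sin psi = eps * sin h by rewrite /psi; case: he => ->; rewrite ?mul1r ?mulN1r ?sinN ?mulN1r.
under eq_bigr do rewrite -natr1 addrAC subrr add0r mul1r hc hs.
under [X in _ <= _ * X]eq_bigr do rewrite subrr mul0r cos0 sin0 mul0r addr0 mul1r.
rewrite big_split /= -!mulr_sumr.
by [].
Qed.

End Planar.

Section Key.
Variable R : realType.
Variable a : 'cV[R]_3.
Hypothesis Ha : unit_vec a.

Lemma key_vec m (x : nat -> 'cV[R]_3) (phi : R) : (1 <= m)%N -> x m.+2 = x 0 ->
  - (pi / (m.+2)%:R) <= phi <= pi / (m.+2)%:R ->
  \sum_(0 <= j < m.+2) form (rotexp a phi) (x j) (x j.+1) <=
  \sum_(0 <= j < m.+2) form (rotexp a phi) (x j) (x j).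
Proof.
move=> hm hx /andP [hp1 hp2].
have P1 := @planar _ a Ha m x 1 hx (or_introl erefl).
have P2 := @planar _ a Ha m x (-1) hx (or_intror erefl).
have A := @per_le _ (fun j => al a (x j)) m.+2 (congr1 _ hx).
under eq_bigr do rewrite form_rot //.
under [X in _ <= X]eq_bigr do rewrite form_rot // g1xx mulr0 addr0.
rewrite !big_split /= -!mulr_sumr.
move: P1 P2 A.
set h := pi / (m.+2)%:R.
rewrite -/h in hp1 hp2.
set G2 := \sum_(0 <= j < m.+2) g2 a (x j) (x j.+1).
set G2d := \sum_(0 <= j < m.+2) g2 a (x j) (x j).
set T := \sum_(0 <= j < m.+2) g1 a (x j) (x j.+1).
set A1 := \sum_(0 <= j < m.+2) al a (x j) * al a (x j.+1).
set A2 := \sum_(0 <= j < m.+2) al a (x j) ^+ 2.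



move=> P1 P2 A.
have hpi := pi_gt0 R.
have hn : 3 <= (m.+2)%:R :> R by rewrite ler_nat.
have h0 : 0 < h by rewrite /h divr_gt0 // ltr0n.
have h3 : h <= pi / 3.
  rewrite /h ler_pdivrMr ?ltr0n // mulrAC ler_pdivlMr //; nra.
have cpos : 0 < cos h.
  by apply: cos_gt0_pihalf; apply/andP; split; lra.
have spos : 0 < sin h.
  by apply: sin_gt0_pi; apply/andP; split; lra.
have X0 : 0 <= G2d - G2 by nra.
have B1 : cos h * (G2d - G2) - sin h * T >= 0 by lra.
have B2 : cos h * (G2d - G2) + sin h * T >= 0 by lra.
suff : cos phi * G2 + sin phi * T <= cos phi * G2d by lra.
have [hp|hp] := lerP 0 phi.
- have s1 : 0 <= sin phi by apply: sin_ge0_pi; apply/andP; split; lra.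
  have s2 : 0 <= sin (h - phi) by apply: sin_ge0_pi; apply/andP; split; lra.
  rewrite sinB in s2.
  have : 0 <= sin phi * (cos h * (G2d - G2) - sin h * T) by rewrite mulr_ge0.
  have : 0 <= (G2d - G2) * (sin h * cos phi - cos h * sin phi) by rewrite mulr_ge0.
  move=> e1 e2.
  have : 0 <= sin h * (cos phi * G2d - cos phi * G2 - sin phi * T) by nra.
  rewrite pmulr_rge0 //; lra.
- have s1 : 0 <= sin (- phi) by apply: sin_ge0_pi; apply/andP; split; lra.
  have s2 : 0 <= sin (h + phi) by apply: sin_ge0_pi; apply/andP; split; lra.
  rewrite sinD in s2; rewrite sinN in s1.
  have : 0 <= - sin phi * (cos h * (G2d - G2) + sin h * T) by rewrite mulr_ge0.
  have : 0 <= (G2d - G2) * (sin h * cos phi + cos h * sin phi) by rewrite mulr_ge0.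
  move=> e1 e2.
  have : 0 <= sin h * (cos phi * G2d - cos phi * G2 - sin phi * T) by nra.
  rewrite pmulr_rge0 //; lra.
Qed.
End Key.



Section Fc.
Variable R : realType.
Variable n : nat.
Hypothesis n3 : (3 <= n)%N.

Lemma modS k : (k < n)%N -> (k.+1 %% n = if k.+1 == n then 0 else k.+1)%N.
Proof.
move=> hk; case: eqVneq => [->|ne]; first by rewrite modnn.
by rewrite modn_small // ltn_neqAle ne hk.
Qed.

Lemma ordS_neq (i : 'I_n) : (ordS i == i) = false.
Proof.
apply/negbTE; rewrite -(inj_eq val_inj) /=.
have hi := ltn_ord i.
rewrite modS //; move: n3 hi; move: (nat_of_ord i) => k; case: ifP => /eqP; lia.
Qed.

Lemma ordSS_neq (i : 'I_n) : (ordS (ordS i) == i) = false.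
Proof.
apply/negbTE; rewrite -(inj_eq val_inj) /=.
have hi := ltn_ord i.
rewrite (@modS i hi); move: n3 hi; move: (nat_of_ord i) => k.
case: ifP => /eqP e hn hk; (rewrite modS; last lia); case: ifP => /eqP; lia.
Qed.

Lemma blkE (Rt : 'I_n -> 'M[R]_3) i j : blk Rt i j =
  (i == j)%:R *: 1%:M + (ordS i == j)%:R *: Rt i + (ordS j == i)%:R *: (Rt j)^T.
Proof.
rewrite /blk.
have E1 : ((i.+1 %% n)%N == j) = (ordS i == j) by rewrite -(inj_eq val_inj).
have E2 : ((j.+1 %% n)%N == i) = (ordS j == i) by rewrite -(inj_eq val_inj).
rewrite E1 E2.
have [->|nij] := eqVneq i j.
  by rewrite ordS_neq scale1r !scale0r !addr0.
rewrite scale0r add0r.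
have [ei|ni] := eqVneq (ordS i) j.
  have -> : (ordS j == i) = false by rewrite -ei ordSS_neq.
  by rewrite scale1r scale0r addr0.
rewrite scale0r add0r.
by case: (ordS j == i); rewrite ?scale1r ?scale0r.
Qed.

Lemma sum_delta (k : 'I_n) (F : 'I_n -> R) : \sum_j (k == j)%:R * F j = F k.
Proof.
rewrite (bigD1 k) //= eqxx mul1r big1 ?addr0 // => j /negbTE.
by rewrite eq_sym => ->; rewrite mul0r.
Qed.

Lemma fcostE (Rt : 'I_n -> 'M[R]_3) (Q : 'I_n -> 'M[R]_3) :
  fcost Rt Q = - (\sum_i \tr ((Q i)^T *m Q i) + 2 * \sum_i \tr ((Q i)^T *m Rt i *m Q (ordS i))).
Proof.
rewrite /fcost; congr (- _).
have e : forall i j, \tr ((Q i)^T *m blk Rt i j *m Q j) =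
   (i == j)%:R * \tr ((Q i)^T *m Q j) + (ordS i == j)%:R * \tr ((Q i)^T *m Rt i *m Q j)
   + (ordS j == i)%:R * \tr ((Q i)^T *m (Rt j)^T *m Q j).
  move=> i j; rewrite blkE !mulmxDr !mulmxDl -!scalemxAr -!scalemxAl !mxtraceD !mxtraceZ.
  by rewrite mulmx1.
under eq_bigr do under eq_bigr do rewrite e.
under eq_bigr do rewrite !big_split /=.
rewrite !big_split /=.
under eq_bigr do rewrite sum_delta.
under [X in _ + X + _]eq_bigr do rewrite (@sum_delta _ (fun j => \tr ((Q _)^T *m Rt _ *m Q j))).
rewrite [X in _ + X = _]exchange_big /=.
under [X in _ + X = _]eq_bigr do rewrite (@sum_delta _ (fun i => \tr ((Q i)^T *m (Rt _)^T *m Q _))).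
rewrite -addrA; congr (_ + _).
rewrite mulr2n mulrDl mul1r; congr (_ + _).
apply: eq_bigr => i _.
by rewrite -[LHS]mxtrace_tr !trmx_mul !trmxK mulmxA.
Qed.
End Fc.

Section Core.
Variable R : realType.

Lemma tr_form (Y Z M : 'M[R]_3) : \tr (Y^T *m M *m Z) = \sum_(c < 3) form M (col c Y) (col c Z).
Proof.
rewrite /mxtrace; apply: eq_bigr => c _; rewrite /form.
have -> : (Y^T *m M *m Z) c c = (row c (col c (Y^T *m M *m Z))) 0 0 by rewrite !mxE.
by rewrite tr_col !colE !row_mul !mulmxA.
Qed.

Lemma core_bound m (Y : 'I_(m.+2) -> 'M[R]_3) (a : 'cV[R]_3) (phi : R) :
  unit_vec a -> (1 <= m)%N ->
  - (pi / (m.+2)%:R) <= phi <= pi / (m.+2)%:R ->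
  \sum_i \tr ((Y i)^T *m rotexp a phi *m Y (ordS i)) <=
  \sum_i \tr ((Y i)^T *m rotexp a phi *m Y i).
Proof.
move=> Ha hm hphi.
under eq_bigr do rewrite tr_form.
under [X in _ <= X]eq_bigr do rewrite tr_form.
rewrite exchange_big [X in _ <= X]exchange_big /=.
apply: ler_sum => c _.
pose x (j : nat) := col c (Y (inZp j)).
have hx : x m.+2 = x 0 by rewrite /x; congr (col c (Y _)); apply: val_inj; rewrite /= modnn mod0n.
have := key_vec Ha hm hx hphi.
rewrite !big_mkord.
have e1 : forall i : 'I_(m.+2), inZp i = i.
  by move=> i; apply: val_inj; rewrite /= modn_small.
have e2 : forall i : 'I_(m.+2), inZp i.+1 = ordS i.
  by move=> i; apply: val_inj.
rewrite /x; under [X in X <= _ -> _]eq_bigr do rewrite e1 e2; under [X in _ <= X -> _]eq_bigr do rewrite e1; by [].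
Qed.
End Core.



Lemma Pstep (R : realType) n (F : 'I_n -> 'M[R]_3) k (hk : (k < n)%N) :
  \prod_(s < n | (s < k.+1)%N) F s = (\prod_(s < n | (s < k)%N) F s) *m F (Ordinal hk).
Proof.
rewrite (big_ord_narrow hk) (big_ord_narrow (ltnW hk)) big_ord_recr /= mulmxE.
congr (_ * _); last by congr F; apply: val_inj.
by apply: eq_bigr => i _; congr F; apply: val_inj.
Qed.

Theorem theorem1 (R : realType) (n : nat) (Rt : 'I_n -> 'M[R]_3)
  (u : 'cV[R]_3) (theta : 'I_n -> R) (nhat : 'cV[R]_3) (gamma : R) :
  (3 <= n)%N ->
  (forall i, SO3 (Rt i)) ->
  unit_vec u ->
  (forall i, Rt i = rotexp u (theta i)) ->
  unit_vec nhat -> - pi <= gamma <= pi ->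
  cycle_err Rt = rotexp nhat gamma ->
  let Rs := Rstar Rt (rotexp nhat (gamma / n%:R)) in
  (forall k, SO3 (Rs k)) /\
  (forall Q : 'I_n -> 'M[R]_3, (forall k, SO3 (Q k)) ->
     fcost Rt Rs <= fcost Rt Q).
Proof.
move=> n3 HRt Hu HRu Hn Hg HE Rs.
have nR0 : (n%:R : R) != 0 by rewrite pnatr_eq0; case: (n) n3.
set th := gamma / n%:R.
pose P (k : nat) := \prod_(s < n | (s < k)%N) Rt s.
have RsE : forall k : 'I_n, Rs k = (P k)^T *m rotexp nhat (k%:R * th).
  by move=> k; rewrite /Rs /Rstar rotexpX.
have HP : forall k, (P k)^T *m P k = 1%:M /\ P k *m (P k)^T = 1%:M /\ \det (P k) = 1.
  move=> k; rewrite /P; apply: (big_ind (fun M : 'M[R]_3 => M^T *m M = 1%:M /\ M *m M^T = 1%:M /\ \det M = 1)).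
  - by rewrite trmx1 mulmx1 det1.
  - move=> A B [hA1 [hA2 hA3]] [hB1 [hB2 hB3]]; rewrite -mulmxE trmx_mul; split.
      by rewrite mulmxA -(mulmxA B^T) hA1 mulmx1 hB1.
    split; first by rewrite mulmxA -(mulmxA A) hB2 mulmx1 hA2.
    by rewrite det_mulmx hA3 hB3 mulr1.
  - move=> i _; have [h1 h2] := HRt i; split => //; split => //; exact: mulmx1C.
have HRs : forall k, SO3 (Rs k).
  move=> k; rewrite RsE; have [h1 [h2 h3]] := HP k; split.
  - by rewrite trmx_mul trmxK mulmxA -(mulmxA _ (P k)) h2 mulmx1 rotexp_orth.
  - by rewrite det_mulmx det_tr h3 rotexp_det // mulr1.
split => //.
have Hstep : forall i : 'I_n, (Rs i)^T *m Rt i *m Rs (ordS i) = rotexp nhat th.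
  move=> i; rewrite !RsE.
  have hi := ltn_ord i.
  have PS : P i *m Rt i = P i.+1.
    by rewrite /P (Pstep _ hi); congr (_ *m Rt _); apply: val_inj.
  rewrite trmx_mul trmxK rotexpT // -!mulmxA (mulmxA (P i)) PS.
  case: (eqVneq i.+1 n) => e.
  - have -> : nat_of_ord (ordS i) = 0%N by rewrite /= e modnn.
    have -> : P 0%N = 1%:M by rewrite /P big_pred0.
    have -> : P i.+1 = rotexp nhat gamma.
      by rewrite -HE /P /cycle_err e; apply: eq_bigl => s; rewrite ltn_ord.
    rewrite mul0r rotexp0 // trmx1 !mulmx1 rotexpD //; congr rotexp.
    have e' : (i%:R : R) + 1 = n%:R by rewrite natr1 e.
    rewrite /th -e'; field; by rewrite e'.
  - have -> : nat_of_ord (ordS i) = i.+1 by rewrite /= modn_small // ltn_neqAle e hi.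
    have [_ [h2 _]] := HP i.+1.
    rewrite (mulmxA (P i.+1)) h2 mul1mx rotexpD //; congr rotexp.
    by rewrite -natr1; ring.
clearbody Rs.
move=> Q HQ.
rewrite !fcostE //.
have e1 : forall (Q' : 'I_n -> 'M[R]_3), (forall k, SO3 (Q' k)) ->
    \sum_i \tr ((Q' i)^T *m Q' i) = \sum_(i < n) \tr (1%:M : 'M[R]_3).
  move=> Q' HQ'; apply: eq_bigr => i _; have [h _] := HQ' i; by rewrite h.
rewrite (e1 _ HQ) (e1 _ HRs) lerN2 lerD2l ler_pM2l ?ltr0n //.
under [X in _ <= X]eq_bigr do rewrite Hstep.
pose Y i := (Rs i)^T *m Q i.
have Rso : forall i, Rs i *m (Rs i)^T = 1%:M by move=> i; have [h _] := HRs i; exact: mulmx1C.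
have e2 : forall i, (Q i)^T *m Rt i *m Q (ordS i) = (Y i)^T *m rotexp nhat th *m Y (ordS i).
  move=> i; rewrite -(Hstep i) /Y !trmx_mul trmxK.
  by rewrite !mulmxA -(mulmxA _ (Rs i)) Rso mulmx1 -(mulmxA _ (Rs (ordS i))) Rso mulmx1.
have e3 : forall i, \tr (rotexp nhat th) = \tr ((Y i)^T *m rotexp nhat th *m Y i).
  move=> i; rewrite -mulmxA mxtrace_mulC -mulmxA.
  suff -> : Y i *m (Y i)^T = 1%:M by rewrite mulmx1.
  apply: mulmx1C; rewrite /Y trmx_mul trmxK mulmxA -(mulmxA _ (Rs i)) Rso mulmx1.
  by have [h _] := HQ i.
rewrite (eq_bigr _ (fun i _ => congr1 mxtrace (e2 i))) [X in _ <= X](eq_bigr _ (fun i _ => e3 i)).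
rewrite /th; clear e1 e2 e3; clearbody Y; move: Y; clear -Hn Hg n3.
case: n n3 => [|[|m]] // n3 Y.
apply: core_bound => //.
have hn : (0 : R) < (m.+2)%:R by rewrite ltr0n.
rewrite -mulNr; move/andP: Hg => [g1 g2]; apply/andP; split.
  by rewrite ler_pM2r ?invr_gt0.
by rewrite ler_pM2r ?invr_gt0.
Qed.
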